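(* Let $Q$ be a finite boolean combination (finite unions, intersections and complements) of principal quantifiers of the form $Q_A$ with $A\subseteq\mathbb{N}^d$ for a fixed $d$. Then for every $a\in(\mathbb{N}^d)^{<\omega}$ the orbit $\{g(a):g\in\mathrm{Aut}(Q)\}$ is definable in $\mathscr{L}_{\omega_1\omega}(Q)$.
   Context: For $A\subseteq\mathbb{N}^d$, the principal quantifier $Q_A=\{X\subseteq\mathbb{N}^d:A\subseteq X\}$ is a quantifier of type $\langle d\rangle$ on $\mathbb{N}$ (a family of subsets of $\mathbb{N}^d$). A permutation $g$ of $\mathbb{N}$ acts coordinatewise on tuples and on subsets by $g(X)=\{g(x):x\in X\}$; $g$ fixes $Q$ if $X\in Q\iff g(X)\in Q$ for all $X\subseteq\mathbb{N}^d$, and $\mathrm{Aut}(Q)$ is the group of such permutations. $\mathscr{L}_{\omega_1\omega}(Q)$ extends $\mathscr{L}_{\omega_1\omega}$ (countable conjunctions/disjunctions, finite quantifier strings) by formulas $Qx\,\varphi(x,y)$ ($x$ a $d$-tuple of variables) with $\mathbb{N}\models Qx\,\varphi(x,b)$ iff $\{a\in\mathbb{N}^d:\mathbb{N}\models\varphi(a,b)\}\in Q$. A set $B$ of tuples is definable in $\mathscr{L}_{\omega_1\omega}(Q)$ if there is a formula without parameters whose only non-logical symbol is $Q$ that defines $B$ in $\mathbb{N}$. *)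

(* Defs.v *)
From mathcomp Require Import all_boot.
Set Implicit Arguments. Unset Strict Implicit. Unset Printing Implicit Defensive.

Definition tup (d : nat) := 'I_d -> nat.

(* A quantifier of type <d> on N: a family of subsets of N^d *)
Definition quantifier (d : nat) := (tup d -> Prop) -> Prop.

Definition principal (d : nat) (A : tup d -> Prop) : quantifier d :=
  fun X => forall x, A x -> X x.

Inductive bcomb (d : nat) : Type :=
| BPrin of (tup d -> Prop)
| BCompl of bcomb d
| BInter of bcomb d & bcomb d
| BUnion of bcomb d & bcomb d.

Fixpoint bsem (d : nat) (C : bcomb d) : quantifier d :=
  match C with
  | BPrin A => principal A
  | BCompl C1 => fun X => ~ bsem C1 X
  | BInter C1 C2 => fun X => bsem C1 X /\ bsem C2 X
  | BUnion C1 C2 => fun X => bsem C1 X \/ bsem C2 X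
  end.

Definition gimg (d : nat) (g : nat -> nat) (X : tup d -> Prop) : tup d -> Prop :=
  fun y => exists2 x, X x & forall i, y i = g (x i).

Definition in_Aut (d : nat) (Q : quantifier d) (g : nat -> nat) : Prop :=
  bijective g /\ forall X : tup d -> Prop, Q X <-> Q (gimg g X).

Definition Aut_orbit (d n : nat) (Q : quantifier d) (a : 'I_n -> tup d)
  : ('I_n -> tup d) -> Prop :=
  fun b => exists g, in_Aut Q g /\ forall i j, b i j = g (a i j).

(* Formulas of L_{omega_1 omega}(Q) whose only non-logical symbol is Q;
   variables are natural numbers; countable conjunctions/disjunctions are
   indexed by nat (finite ones by repetition). *)
Inductive formula (d : nat) : Type :=
| FEq of nat & nat
| FNot of formula d
| FAnd of (nat -> formula d)
| FOr of (nat -> formula d)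
| FEx of nat & formula d
| FQ of ('I_d -> nat) & formula d.

Definition upd (d : nat) (env : nat -> nat) (vs : 'I_d -> nat) (a : tup d) : nat -> nat :=
  fun v => match [pick i | vs i == v] with Some i => a i | None => env v end.

Definition upd1 (env : nat -> nat) (x v : nat) : nat -> nat :=
  fun w => if w == x then v else env w.

(* Satisfaction in N.  For Q x phi, the set is {a in N^d : N |= phi(a)},
   where a tuple of variables x with repetitions only admits tuples a
   agreeing on repeated positions. *)
Fixpoint sat (d : nat) (Q : quantifier d) (env : nat -> nat) (phi : formula d) : Prop :=
  match phi with
  | FEq x y => env x = env y
  | FNot p => ~ sat Q env p
  | FAnd f => forall k, sat Q env (f k)
  | FOr f => exists k, sat Q env (f k)
  | FEx x p => exists v, sat Q (upd1 env x v) p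
  | FQ vs p => Q (fun a => (forall i j, vs i = vs j -> a i = a j) /\ sat Q (upd env vs a) p)
  end.

Definition definable (d n : nat) (Q : quantifier d) (B : ('I_n -> tup d) -> Prop) : Prop :=
  exists (phi : formula d) (vars : 'I_n -> 'I_d -> nat),
    injective (fun p : 'I_n * 'I_d => vars p.1 p.2) /\
    forall env : nat -> nat, sat Q env phi <-> B (fun i j => env (vars i j)).

(* Main.v *)
Require Import Defs.
From mathcomp Require Import all_boot.
From Stdlib Require Import Classical ClassicalEpsilon FunctionalExtensionality.
From Stdlib Require List.
Set Implicit Arguments. Unset Strict Implicit. Unset Printing Implicit Defensive.

Section Main.
Variable d : nat.

Lemma bsem_ext (C0 : bcomb d) (X Y : tup d -> Prop) :
  (forall x, X x <-> Y x) -> (bsem C0 X <-> bsem C0 Y).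
Proof.
move=> H; elim: C0 => [A|C1 IH|C1 IH1 C2 IH2|C1 IH1 C2 IH2] /=.
- by split=> HA x Ax; apply/H; apply: HA.
- by rewrite IH.
- by rewrite IH1 IH2.
- by rewrite IH1 IH2.
Qed.

Definition co (G : list (tup d)) (t : tup d) := forall z, List.In z G -> ~ (forall i, t i = z i).

Lemma tup_ext (x y : tup d) : (forall i, x i = y i) -> x = y.
Proof. by move=> H; apply: functional_extensionality. Qed.

Lemma witness (C0 : bcomb d) (X : tup d -> Prop) : exists F : list (tup d),
  (forall z, List.In z F -> ~ X z) /\ forall G, List.incl F G -> (forall z, List.In z G -> ~ X z) ->
    (bsem C0 X <-> bsem C0 (co G)).
Proof.
elim: C0 => [A|C1 IH|C1 IH1 C2 IH2|C1 IH1 C2 IH2] /=.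
- case: (classic (forall x, A x -> X x)) => HA.
  + exists nil; split => // G _ HG; split => // _ x Ax z Hz Heq.
    have E := tup_ext Heq; subst z; exact: (HG x Hz (HA x Ax)).
  + have [w Hw] := not_all_ex_not _ _ HA.
    have Aw : A w by apply: NNPP => Hn; apply: Hw => /Hn.
    have Xw : ~ X w by move=> Xw; apply: Hw.
    exists (w :: nil); split; first by move=> z [<-|[]].
    move=> G HG _; split => H; first by exfalso; apply: HA.
    exfalso; apply: (H w Aw w (HG w (or_introl erefl))) => i //.
- have [F [HF1 HF2]] := IH; exists F; split => // G H1 H2.
  by rewrite (HF2 G H1 H2).
- have [F1 [HF1 HF1']] := IH1; have [F2 [HF2 HF2']] := IH2.
  exists (F1 ++ F2); split.
    by move=> z Hz; case: (List.in_app_or _ _ _ Hz) => ?; [apply: HF1|apply: HF2].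
  move=> G HG HX.
  have G1 : List.incl F1 G by move=> z Hz; apply: HG; apply: List.in_or_app; left.
  have G2 : List.incl F2 G by move=> z Hz; apply: HG; apply: List.in_or_app; right.
  by rewrite (HF1' G G1 HX) (HF2' G G2 HX).
- have [F1 [HF1 HF1']] := IH1; have [F2 [HF2 HF2']] := IH2.
  exists (F1 ++ F2); split.
    by move=> z Hz; case: (List.in_app_or _ _ _ Hz) => ?; [apply: HF1|apply: HF2].
  move=> G HG HX.
  have G1 : List.incl F1 G by move=> z Hz; apply: HG; apply: List.in_or_app; left.
  have G2 : List.incl F2 G by move=> z Hz; apply: HG; apply: List.in_or_app; right.
  by rewrite (HF1' G G1 HX) (HF2' G G2 HX).
Qed.

Variable C : bcomb d.
Local Notation Q := (bsem C).

Lemma aut_crit (g h : nat -> nat) : cancel g h -> cancel h g ->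
  (forall G, Q (co G) <-> Q (fun t => forall z, List.In z G -> ~ forall i, t i = g (z i))) ->
  in_Aut Q g.
Proof.
move=> gK hK HG; split; first by exists h.
move=> X.
have [F1 [HF1 HF1']] := witness C X.
have [F2 [HF2 HF2']] := witness C (gimg g X).
pose hh (z : tup d) : tup d := fun i => h (z i).
pose gg (z : tup d) : tup d := fun i => g (z i).
pose G := F1 ++ List.map hh F2.
have HGX : forall z, List.In z G -> ~ X z.
  move=> z Hz; case: (List.in_app_or _ _ _ Hz); first exact: HF1.
  move=> /(List.in_map_iff _ _ _) [z' [<- Hz']] Xz; apply: (HF2 z' Hz').
  by exists (hh z') => // i; rewrite /hh hK.
rewrite (HF1' G (fun z Hz => List.in_or_app _ _ _ (or_introl Hz)) HGX) HG.
pose G' := List.map gg G.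
have E : forall t, (forall z, List.In z G -> ~ forall i, t i = g (z i)) <-> co G' t.
  move=> t; split.
  - move=> H z /(List.in_map_iff _ _ _) [z0 [<- Hz0]] Heq; exact: (H z0 Hz0 Heq).
  - move=> H z Hz Heq; apply: (H (gg z)); first exact: List.in_map.
    exact: Heq.
rewrite (bsem_ext C E).
have inc : List.incl F2 G'.
  move=> z Hz; rewrite /G' /G List.map_app; apply: List.in_or_app; right.
  rewrite List.map_map; apply/List.in_map_iff; exists z; split => //.
  by apply: tup_ext => i; rewrite /gg /hh hK.
have HG'X : forall z, List.In z G' -> ~ gimg g X z.
  move=> z; rewrite /G' /G List.map_app => Hz; case: (List.in_app_or _ _ _ Hz).
  - move=> /(List.in_map_iff _ _ _) [z0 [<- Hz0]] [x Xx Hx].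
    apply: (HF1 z0 Hz0); suff -> : z0 = x by [].
    apply: tup_ext => i; apply: (can_inj gK); exact: Hx.
  - rewrite List.map_map => /(List.in_map_iff _ _ _) [z0 [<- Hz0]].
    have -> : gg (hh z0) = z0 by apply: tup_ext => i; rewrite /gg /hh hK.
    exact: HF2.
by rewrite -(HF2' G' inc HG'X).
Qed.



Definition dep M (phi : formula d) := forall e e' : nat -> nat,
  (forall v, v < M -> e v = e' v) -> (sat Q e phi <-> sat Q e' phi).
Definition equiv M (e1 e2 : nat -> nat) := forall phi, dep M phi -> (sat Q e1 phi <-> sat Q e2 phi).

Lemma dep_mono M M' phi : M <= M' -> dep M phi -> dep M' phi.
Proof. move=> le H e e' He; apply: H => v vM; apply: He; exact: leq_trans vM le. Qed.

Lemma dep_not M phi : dep M phi -> dep M (FNot phi).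
Proof. by move=> H e e' He /=; rewrite (H e e' He). Qed.

Lemma upd1_agree M (e e' : nat -> nat) x : (forall v, v < M -> e v = e' v) ->
  forall v, v < M.+1 -> upd1 e M x v = upd1 e' M x v.
Proof.
move=> He v vM; rewrite /upd1; case: eqP => // /eqP nv; apply: He.
by rewrite ltn_neqAle nv -ltnS.
Qed.

Lemma forth M e1 e2 : equiv M e1 e2 -> forall x, exists y, equiv M.+1 (upd1 e1 M x) (upd1 e2 M y).
Proof.
move=> H x; apply: NNPP => Hn.
have Hy : forall y, exists phi, dep M.+1 phi /\ sat Q (upd1 e1 M x) phi /\ ~ sat Q (upd1 e2 M y) phi.
  move=> y; have Hne := not_ex_all_not _ _ Hn y.
  apply: NNPP => Hno; apply: Hne => phi Hphi; split.
  - move=> H1; apply: NNPP => H2; apply: Hno; exists phi; auto.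
  - move=> H2; apply: NNPP => H1; apply: Hno; exists (FNot phi); split; first exact: dep_not.
    by split.
pose psi y := proj1_sig (constructive_indefinite_description _ (Hy y)).
have Hpsi : forall y, dep M.+1 (psi y) /\ sat Q (upd1 e1 M x) (psi y) /\ ~ sat Q (upd1 e2 M y) (psi y).
  move=> y; exact: (proj2_sig (constructive_indefinite_description _ (Hy y))).
pose Phi := FEx M (FAnd psi).
have dPhi : dep M Phi.
  move=> e e' He /=; split=> [[v Hv]|[v Hv]]; exists v => k.
  - by rewrite -((Hpsi k).1 _ _ (upd1_agree v He)).
  - by rewrite ((Hpsi k).1 _ _ (upd1_agree v He)).
have : sat Q e2 Phi.
  rewrite -(H Phi dPhi) /=; exists x => k; exact: (Hpsi k).2.1.
move=> /= [v Hv]; exact: (Hpsi v).2.2 (Hv v).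
Qed.

Lemma equiv_sym M e1 e2 : equiv M e1 e2 -> equiv M e2 e1.
Proof. by move=> H phi Hphi; rewrite H. Qed.

Lemma back M e1 e2 : equiv M e1 e2 -> forall y, exists x, equiv M.+1 (upd1 e1 M x) (upd1 e2 M y).
Proof.
move=> /equiv_sym H y; have [x Hx] := forth H y; exists x; exact: equiv_sym.
Qed.

Lemma invariance (g h : nat -> nat) : cancel g h -> cancel h g -> in_Aut Q g ->
  forall phi (env : nat -> nat), sat Q env phi <-> sat Q (fun v => g (env v)) phi.
Proof.
move=> gK hK [_ HA]; elim=> [x y|p IH|f IH|f IH|x p IH|vs p IH] env /=.
- by split => [->//|/(can_inj gK)].
- by rewrite IH.
- by split=> H k; [rewrite -IH | rewrite IH].
- by split=> [[k H]|[k H]]; exists k; [rewrite -IH | rewrite IH].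
- split=> [[v Hv]|[v Hv]].
  + exists (g v); rewrite IH in Hv.
    suff <- : (fun w => g (upd1 env x v w)) = upd1 (fun v0 => g (env v0)) x (g v) by [].
    by apply: functional_extensionality => w; rewrite /upd1; case: eqP.
  + exists (h v); rewrite IH.
    suff -> : (fun w => g (upd1 env x (h v) w)) = upd1 (fun v0 => g (env v0)) x v by [].
    by apply: functional_extensionality => w; rewrite /upd1; case: eqP.
- rewrite HA; apply: bsem_ext => t; split.
  + move=> [x [Hc Hs] Hx]; split.
      by move=> i j E; rewrite !Hx (Hc i j E).
    rewrite IH in Hs.
    suff <- : (fun w => g (upd env vs x w)) = upd (fun v0 => g (env v0)) vs t by [].
    by apply: functional_extensionality => w; rewrite /upd; case: pickP => // i _; rewrite Hx.
  + move=> [Hc Hs]; exists (fun i => h (t i)); last by move=> i; rewrite hK.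
    split; first by move=> i j E; rewrite (Hc i j E).
    rewrite IH.
    suff -> : (fun w => g (upd env vs (fun i => h (t i)) w)) = upd (fun v0 => g (env v0)) vs t by [].
    by apply: functional_extensionality => w; rewrite /upd; case: pickP => // i _; rewrite hK.
Qed.

Definition TrueF : formula d := FEq d 0 0.
Definition tupEq N (w : 'I_d -> nat) : formula d :=
  FAnd (fun k => oapp (fun i : 'I_d => FEq d (N + i) (w i)) TrueF (insub k : option 'I_d)).

Lemma upd_hi env N (t : tup d) (i : 'I_d) : upd env (fun i : 'I_d => N + i) t (N + i) = t i.
Proof.
rewrite /upd; case: pickP => [j /eqP E|/(_ i)]; last by rewrite eqxx.
by have /val_inj -> : nat_of_ord j = i by apply/eqP; rewrite -(eqn_add2l N) E.
Qed.

Lemma upd_lo env N (t : tup d) w : w < N -> upd env (fun i : 'I_d => N + i) t w = env w.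
Proof.
move=> wN; rewrite /upd; case: pickP => // j /eqP E.
by move: wN; rewrite -E ltnNge leq_addr.
Qed.

Lemma sat_tupEq env N w : sat Q env (tupEq N w) <-> forall i : 'I_d, env (N+i) = env (w i).
Proof.
split => /= H.
- move=> i; move: (H i); by rewrite valK.
- move=> k; case: insubP => [i _ _|_] //=; exact: H.
Qed.

Definition PsiF B N (G : list (tup d)) : formula d :=
  FQ (fun i : 'I_d => N + i) (FAnd (fun k => oapp (fun z : tup d =>
     FNot (tupEq N (fun i => B + (z i).*2))) TrueF (List.nth_error G k))).

Lemma sat_Psi B N G env : (forall z i, List.In z G -> B + (z i).*2 < N) ->
  (sat Q env (PsiF B N G) <->
   Q (fun t => forall z, List.In z G -> ~ forall i, t i = env (B + (z i).*2))).
Proof.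
move=> HN /=; apply: bsem_ext => t; split.
- move=> [_ H] z Hz Heq.
  have [k Hk] := List.In_nth_error _ _ Hz.
  move: (H k); rewrite Hk => Hn; apply: Hn; apply/sat_tupEq => i.
  by rewrite upd_hi upd_lo ?HN // Heq.
- move=> H; split; first by move=> i j /addnI /val_inj ->.
  move=> k; case Hk: (List.nth_error G k) => [z|] //=.
  have Hz := List.nth_error_In _ _ Hk.
  move=> /sat_tupEq Heq; apply: (H z Hz) => i.
  by rewrite -(upd_hi env N t i) Heq upd_lo ?HN.
Qed.

Lemma bound_ex B (G : list (tup d)) : exists N, forall z i, List.In z G -> B + (z i).*2 < N.
Proof.
elim: G => [|z G [N HN]]; first by exists 0.
exists (maxn N (B + (\max_(i < d) z i).*2).+1) => z' i [<-|Hz'].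
- rewrite leq_max; apply/orP; right; rewrite ltnS leq_add2l leq_double.
  exact: leq_bigmax.
- by rewrite leq_max (HN z' i Hz').
Qed.

Definition fy (a b : nat -> nat) M x :=
  epsilon (inhabits 0) (fun y => equiv M.+1 (upd1 a M x) (upd1 b M y)).
Definition fx (a b : nat -> nat) M y :=
  epsilon (inhabits 0) (fun x => equiv M.+1 (upd1 a M x) (upd1 b M y)).

Section Construct.
Variables (M0 : nat) (e1 e2 : nat -> nat).
Hypothesis H0 : equiv M0 e1 e2.

Fixpoint st k : (nat -> nat) * (nat -> nat) :=
  match k with
  | 0 => (e1, e2)
  | k'.+1 => let p := st k' in let M := M0 + k' in
     if odd k' then (upd1 p.1 M (fx p.1 p.2 M k'./2), upd1 p.2 M k'./2)
     else (upd1 p.1 M k'./2, upd1 p.2 M (fy p.1 p.2 M k'./2))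
  end.

Lemma st_equiv k : equiv (M0 + k) (st k).1 (st k).2.
Proof.
elim: k => [|k IH]; first by rewrite addn0.
rewrite addnS /=; case: (odd k) => /=.
- exact: (epsilon_spec (inhabits 0) (fun x => equiv (M0+k).+1 (upd1 (st k).1 (M0+k) x) (upd1 (st k).2 (M0+k) k./2)) (back IH _)).
- exact: (epsilon_spec (inhabits 0) (fun y => equiv (M0+k).+1 (upd1 (st k).1 (M0+k) k./2) (upd1 (st k).2 (M0+k) y)) (forth IH _)).
Qed.

Lemma st_stable k k' v : k <= k' -> v < M0 + k ->
  (st k').1 v = (st k).1 v /\ (st k').2 v = (st k).2 v.
Proof.
move=> le vlt; elim: k' le => [|k' IH]; first by rewrite leqn0 => /eqP ->.
rewrite leq_eqVlt => /orP [/eqP -> //|]; rewrite ltnS => le.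
have [<- <-] := IH le.
have ne : (v == M0 + k') = false.
  apply/negbTE; rewrite neq_ltn; apply/orP; left; apply: leq_trans vlt _; by rewrite leq_add2l.
by rewrite /=; case: (odd k'); rewrite /= /upd1 ne.
Qed.

Definition E1 v := (st v.+1).1 v.
Definition E2 v := (st v.+1).2 v.

Lemma E_st k v : v < M0 + k -> E1 v = (st k).1 v /\ E2 v = (st k).2 v.
Proof.
move=> vk.
have v1 : v < M0 + v.+1 by rewrite addnS ltnS leq_addl.
have [A1 A2] := st_stable (leq_maxl k v.+1) vk.
have [B1 B2] := st_stable (leq_maxr k v.+1) v1.
by rewrite /E1 /E2 -A1 -A2 B1 B2.
Qed.

Lemma E_equiv phi k : dep (M0 + k) phi -> (sat Q E1 phi <-> sat Q E2 phi).
Proof.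
move=> Hd.
rewrite (Hd E1 (st k).1); last by move=> v vk; case: (E_st vk).
rewrite (Hd E2 (st k).2); last by move=> v vk; case: (E_st vk).
exact: st_equiv.
Qed.

Lemma E1_even s : E1 (M0 + s.*2) = s.
Proof.
have hl : M0 + s.*2 < M0 + (s.*2).+1 by rewrite addnS.
have [-> _] := E_st hl.
by rewrite /= odd_double /= /upd1 eqxx doubleK.
Qed.

Lemma E2_odd s : E2 (M0 + (s.*2).+1) = s.
Proof.
have hl : M0 + (s.*2).+1 < M0 + (s.*2).+2 by rewrite !addnS.
have [_ ->] := E_st hl.
by rewrite /= odd_double /= /upd1 eqxx uphalf_double.
Qed.

Lemma dep_eq M v w : v < M -> w < M -> dep M (FEq d v w).
Proof. by move=> vM wM e e' H /=; rewrite (H v vM) (H w wM). Qed.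

Lemma E_eq v w : E1 v = E1 w <-> E2 v = E2 w.
Proof.
apply: (@E_equiv (FEq d v w) (v + w).+1); apply: dep_eq.
- by rewrite addnS ltnS; apply: leq_trans (leq_addr w v) _; rewrite leq_addl.
- by rewrite addnS ltnS; apply: leq_trans (leq_addl v w) _; rewrite leq_addl.
Qed.

Definition gg x := E2 (M0 + x.*2).
Definition hh y := E1 (M0 + (y.*2).+1).

Lemma ggE v : gg (E1 v) = E2 v.
Proof. by apply/E_eq; rewrite E1_even. Qed.

Lemma ggK : cancel gg hh.
Proof.
move=> x; rewrite /hh -[in RHS](E1_even x); apply/E_eq.
by rewrite E2_odd.
Qed.

Lemma hhK : cancel hh gg.
Proof. by move=> y; rewrite /hh ggE E2_odd. Qed.

Lemma gg_aut : in_Aut Q gg.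
Proof.
apply: (aut_crit ggK hhK) => G.
have [N HN] := bound_ex M0 G.
have dP : dep (M0 + N) (PsiF M0 N G).
  apply: (@dep_mono N); first by rewrite leq_addl.
  move=> e e' He; rewrite !sat_Psi //; apply: bsem_ext => t.
  by split=> H z Hz Heq; apply: (H z Hz) => i; rewrite Heq ?He // HN.
have := E_equiv dP; rewrite !sat_Psi // => E.
transitivity (Q (fun t => forall z, List.In z G -> ~ forall i, t i = E1 (M0 + (z i).*2))).
  by apply: bsem_ext => t; split=> H z Hz Heq; apply: (H z Hz) => i; rewrite Heq ?E1_even.
by rewrite E.
Qed.

Lemma construct : exists g, in_Aut Q g /\ forall v, v < M0 -> e2 v = g (e1 v).
Proof.
exists gg; split; first exact: gg_aut.
move=> v vM; have vM' : v < M0 + 0 by rewrite addn0.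
have [A B] := E_st vM'.
by rewrite /= in A B; rewrite -A -B ggE.
Qed.

End Construct.

Section Final.
Variables (n : nat) (a : 'I_n -> tup d).

Definition T := ('I_n * 'I_d)%type.
Definition m := #|{: T}|.
Definition vars (i : 'I_n) (j : 'I_d) : nat := nat_of_ord (enum_rank ((i, j) : T)).

Lemma vars_inj : injective (fun p : 'I_n * 'I_d => vars p.1 p.2).
Proof.
move=> [i j] [i' j'] /= /val_inj /enum_rank_inj; done.
Qed.

Lemma vars_lt i j : vars i j < m.
Proof. exact: ltn_ord. Qed.

Lemma vars_surj v : v < m -> exists i j, v = vars i j.
Proof.
move=> vm; set k : 'I_m := Ordinal vm.
exists (enum_val k).1, (enum_val k).2.
by rewrite /vars -surjective_pairing enum_valK.
Qed.

Definition env_a (v : nat) : nat :=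
  match (insub v : option 'I_m) with
  | Some k => a (enum_val k).1 (enum_val k).2
  | None => 0 end.

Lemma env_aE i j : env_a (vars i j) = a i j.
Proof. by rewrite /env_a /vars valK enum_rankK. Qed.

Definition tupl (e : nat -> nat) : 'I_n -> tup d := fun i j => e (vars i j).
Local Notation B := (Aut_orbit Q a).

Lemma sep e : ~ B (tupl e) -> exists phi, dep m phi /\ sat Q env_a phi /\ ~ sat Q e phi.
Proof.
move=> nB; apply: NNPP => Hn; apply: nB.
have Heq : equiv m env_a e.
  move=> phi Hphi; split.
  - move=> H1; apply: NNPP => H2; apply: Hn; exists phi; auto.
  - move=> H2; apply: NNPP => H1; apply: Hn; exists (FNot phi); split; first exact: dep_not.
    by split.
have [g [Hg Hge]] := construct Heq.
exists g; split => // i j; rewrite /tupl Hge ?vars_lt // env_aE //.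
Qed.

Definition conjF (k : nat) : formula d :=
  let s := odflt [::] (unpickle k : option (seq nat)) in
  let e := fun v => nth 0 s v in
  match excluded_middle_informative (B (tupl e)) with
  | left _ => TrueF
  | right nb => proj1_sig (constructive_indefinite_description _ (sep nb))
  end.

Lemma mainF env : sat Q env (FAnd conjF) <-> B (tupl env).
Proof.
split.
- move=> /= H; apply: NNPP => nB.
  move: (H (pickle (mkseq env m))); rewrite /conjF pickleK /=.
  have agree : forall v, v < m -> nth 0 (mkseq env m) v = env v.
    by move=> v vm; rewrite nth_mkseq.
  case: (excluded_middle_informative _) => [Hb|nb].
  + exfalso; apply: nB; move: Hb => [g [Hg Hb]]; exists g; split => // i j.
    by rewrite -Hb /tupl agree ?vars_lt.
  + move: (proj2_sig (constructive_indefinite_description _ (sep nb))).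
    set phi := proj1_sig _; move=> [Hd [_ Hs]] Hsat; apply: Hs.
    by rewrite -(Hd env) // => v vm; rewrite agree.
- move=> Hb; change (forall k, sat Q env (conjF k)) => k; rewrite /conjF.
  case: (excluded_middle_informative _) => [_|nb]; first exact: erefl.
  move: (proj2_sig (constructive_indefinite_description _ (sep nb))).
  set phi := proj1_sig _; move=> [Hd [Ha _]].
  move: Hb => [g [Hg Hge]].
  have [_ [h gK hK]] : in_Aut Q g /\ bijective g by split; [exact: Hg| exact: Hg.1].
  rewrite (invariance gK hK Hg) in Ha.
  rewrite (Hd env (fun v => g (env_a v))) //.
  move=> v /vars_surj [i [j ->]]; rewrite env_aE; exact: Hge.
Qed.

End Final.
End Main.

Theorem proposition22 (d : nat) (C : bcomb d) (n : nat) (a : 'I_n -> tup d) :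
  definable (bsem C) (Aut_orbit (bsem C) a).
Proof.
exists (FAnd (conjF C a)), (@vars d n); split; first exact: vars_inj.
exact: mainF.
Qed.
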